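(* Let $\Gamma$ be a group with a strictly decreasing sequence $\{\Gamma_n\}$ of finite-index normal subgroups with trivial intersection, $Z=\varprojlim\Gamma/\Gamma_n$ with the left translation action, $\pi_n:Z\to\Gamma/\Gamma_n$ the quotient maps, and for $n\ge2$ let $\gamma_n\in\Gamma_{n-1}\setminus\Gamma_n$ and $C_n=\pi_n^{-1}(\gamma_n\Gamma_n)$. Let $s_1,s_2\in\Gamma$ and $z,z'\in Z$ with $s_1z,s_2z\in C_n$ and $s_2z'\in C_m$ ($n,m\ge2$). Then $m=n$ if and only if $s_1z'\in C_n$.
   Context: $Z=\varprojlim\Gamma/\Gamma_n$ is the compact group of compatible sequences in $\prod_n\Gamma/\Gamma_n$, containing $\Gamma$ as a subgroup. (In the paper $\Gamma$ is a finitely generated nonabelian free group.) *)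

(* Defs.v *)
From HB Require Import structures.
From mathcomp Require Import all_boot monoid.
Set Implicit Arguments. Unset Strict Implicit. Unset Printing Implicit Defensive.
Local Open Scope group_scope.

Section Defs.
Variable G : groupType.

Definition normal_subgroup (H : G -> Prop) : Prop :=
  [/\ H 1, (forall x y, H x -> H y -> H (x * y^-1))
    & (forall x g, H x -> H (g^-1 * x * g))].

Definition lcoset (H : G -> Prop) (g : G) : G -> Prop := fun x => H (g^-1 * x).

Definition finite_index (H : G -> Prop) : Prop :=
  exists s : seq G, forall g : G, exists2 r, r \in s & lcoset H r g.

Definition strict_subset (K H : G -> Prop) : Prop :=
  (forall x, K x -> H x) /\ (exists x, H x /\ ~ K x).

(* Points of Z = lim_{<-} Gamma/Gamma_n (n >= 1): compatible sequences of cosets.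
   z n is the n-th coordinate pi_n(z) in Gamma/Gamma_n, a left coset of Gamma_n.
   (The coordinate n = 0 is unused.) *)
Definition in_Z (Gam : nat -> G -> Prop) (z : nat -> G -> Prop) : Prop :=
  (forall n, (1 <= n)%N -> exists g, z n = lcoset (Gam n) g) /\
  (forall n, (1 <= n)%N -> forall g,
      z n.+1 = lcoset (Gam n.+1) g -> z n = lcoset (Gam n) g).

Definition actZ (s : G) (z : nat -> G -> Prop) : nat -> G -> Prop :=
  fun n x => z n (s^-1 * x).

Definition piZ (z : nat -> G -> Prop) (n : nat) : G -> Prop := z n.

Definition Cset (Gam : nat -> G -> Prop) (gam : nat -> G) (n : nat)
  (z : nat -> G -> Prop) : Prop :=
  piZ z n = lcoset (Gam n) (gam n).

End Defs.

(* Main.v *)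
Require Import Defs.
From HB Require Import structures.
From mathcomp Require Import all_boot monoid.
From mathcomp Require Import zify.
From Stdlib Require Import FunctionalExtensionality PropExtensionality.
Local Open Scope group_scope.

Ltac gsimpl := do 6 rewrite ?invgM ?invgK ?mulgA ?mulgK ?mulgVK ?mulgV ?mulVg ?mul1g ?mulg1.

Section Aux.
Variable G : groupType.
Variable H : G -> Prop.
Hypothesis HN : normal_subgroup H.

Lemma H1 : H 1. Proof. by case: HN. Qed.
Lemma Hinv {x} : H x -> H x^-1.
Proof. case: HN => h1 hm _ hx. by have := hm 1 x h1 hx; rewrite mul1g. Qed.
Lemma Hmul {x y} : H x -> H y -> H (x * y).
Proof. case: HN => h1 hm _ hx hy. by have := hm x y^-1 hx (Hinv hy); rewrite invgK. Qed.
End Aux.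
Arguments Hinv {G H} HN {x}.
Arguments Hmul {G H} HN {x y}.

Section Main.
Variable G : groupType.
Variable Gam : nat -> G -> Prop.
Variable gam : nat -> G.
Hypothesis Hnormal : forall k, (1 <= k)%N -> normal_subgroup (Gam k).
Hypothesis Hdec : forall k, (1 <= k)%N -> strict_subset (Gam k.+1) (Gam k).

Lemma chain_aux {j d x} : (1 <= j)%N -> Gam (j + d) x -> Gam j x.
Proof.
move=> hj; elim: d x => [|d IH] x; first by rewrite addn0.
rewrite addnS => hx; apply: IH; exact: ((Hdec (j + d) ltac:(lia)).1 x hx).
Qed.

Lemma chain {j k x} : (1 <= j)%N -> (j <= k)%N -> Gam k x -> Gam j x.
Proof. move=> hj hjk; rewrite -(subnKC hjk); exact: chain_aux. Qed.

Lemma down_aux z : in_Z Gam z -> forall j d g, (1 <= j)%N ->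
  z (j + d) = lcoset (Gam (j + d)) g -> z j = lcoset (Gam j) g.
Proof.
move=> hz j d g hj; elim: d => [|d IH]; first by rewrite addn0.
rewrite addnS => e; apply: IH; apply: hz.2 e; lia.
Qed.

Lemma down {z j k g} : in_Z Gam z -> (1 <= j)%N -> (j <= k)%N ->
  z k = lcoset (Gam k) g -> z j = lcoset (Gam j) g.
Proof. move=> hz hj hjk; rewrite -(subnKC hjk); exact: down_aux. Qed.

Lemma keyP {z k g s} : (1 <= k)%N -> z k = lcoset (Gam k) g ->
  Cset Gam gam k (actZ s z) -> Gam k ((gam k)^-1 * (s * g)).
Proof.
move=> hk hzk hC; have := f_equal (fun f => f (s * g)) hC.
rewrite /= /actZ /piZ hzk /lcoset mulKg mulVg => <-.
by case: (Hnormal _ hk).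
Qed.

Lemma mkC {z k g s} : (1 <= k)%N -> z k = lcoset (Gam k) g ->
  Gam k ((gam k)^-1 * (s * g)) -> Cset Gam gam k (actZ s z).
Proof.
move=> hk hzk hg; rewrite /Cset /piZ /actZ hzk /lcoset.
apply: functional_extensionality => x; apply: propositional_extensionality.
split=> hx.
- have -> : (gam k)^-1 * x = ((gam k)^-1 * (s * g)) * (g^-1 * (s^-1 * x)) by gsimpl.
  exact: (Hmul (Hnormal _ hk) hg hx).
- have -> : g^-1 * (s^-1 * x) = ((gam k)^-1 * (s * g))^-1 * ((gam k)^-1 * x) by gsimpl.
  exact: (Hmul (Hnormal _ hk) (Hinv (Hnormal _ hk) hg) hx).
Qed.
End Main.
Arguments keyP {G Gam gam} Hnormal {z k g s}.
Arguments mkC {G Gam gam} Hnormal {z k g s}.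
Arguments chain {G Gam} Hdec {j k x}.
Arguments down {G Gam z j k g}.

Theorem lemma5p8 (G : groupType) (Gam : nat -> G -> Prop) (gam : nat -> G)
  (Hnormal : forall k, (1 <= k)%N -> normal_subgroup (Gam k))
  (Hfin : forall k, (1 <= k)%N -> finite_index (Gam k))
  (Hdec : forall k, (1 <= k)%N -> strict_subset (Gam k.+1) (Gam k))
  (Htriv : forall x : G, (forall k, (1 <= k)%N -> Gam k x) -> x = 1)
  (Hgam : forall k, (2 <= k)%N -> Gam k.-1 (gam k) /\ ~ Gam k (gam k))
  (n m : nat) (hn : (2 <= n)%N) (hm : (2 <= m)%N)
  (s1 s2 : G) (z z' : nat -> G -> Prop)
  (hz : in_Z Gam z) (hz' : in_Z Gam z')
  (h1 : Cset Gam gam n (actZ s1 z)) (h2 : Cset Gam gam n (actZ s2 z))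
  (h3 : Cset Gam gam m (actZ s2 z')) :
  m = n <-> Cset Gam gam n (actZ s1 z').
Proof.
have hn1 : (1 <= n)%N by lia.
have hm1 : (1 <= m)%N by lia.
have HNn := Hnormal n hn1.
have HNm := Hnormal m hm1.
have [a Ha] := hz.1 n hn1.
have u := keyP Hnormal hn1 Ha h1.
have v := keyP Hnormal hn1 Ha h2.
have t12 : forall c, Gam n ((gam n)^-1 * (s1 * c)) -> Gam n ((gam n)^-1 * (s2 * c)).
  move=> c hc.
  have -> : (gam n)^-1 * (s2 * c) =
    ((gam n)^-1 * (s2 * a)) * ((gam n)^-1 * (s1 * a))^-1 * ((gam n)^-1 * (s1 * c)) by gsimpl.
  refine (Hmul HNn _ hc); exact: (Hmul HNn v (Hinv HNn u)).
have t21 : forall c, Gam n ((gam n)^-1 * (s2 * c)) -> Gam n ((gam n)^-1 * (s1 * c)).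
  move=> c hc.
  have -> : (gam n)^-1 * (s1 * c) =
    ((gam n)^-1 * (s1 * a)) * ((gam n)^-1 * (s2 * a))^-1 * ((gam n)^-1 * (s2 * c)) by gsimpl.
  refine (Hmul HNn _ hc); exact: (Hmul HNn u (Hinv HNn v)).
have [b Hb] := hz'.1 n hn1.
split.
- move=> emn; subst m.
  exact: (mkC Hnormal hn1 Hb (t21 _ (keyP Hnormal hn1 Hb h3))).
- move=> hC.
  case: (ltngtP m n) => // hmn; exfalso.
  + have Hzm := down hz' hm1 (ltnW hmn) Hb.
    have X := keyP Hnormal hm1 Hzm h3.
    have Y := chain Hdec hm1 (ltnW hmn) (t12 _ (keyP Hnormal hn1 Hb hC)).
    have Zg : Gam m (gam n) by apply: (chain Hdec hm1 _ (Hgam n hn).1); lia.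
    apply: (Hgam m hm).2.
    have e : (gam m)^-1 = ((gam m)^-1 * (s2 * b)) * ((gam n)^-1 * (s2 * b))^-1 * (gam n)^-1 by gsimpl.
    rewrite -[gam m]invgK e; refine (Hinv HNm _).
    exact: (Hmul HNm (Hmul HNm X (Hinv HNm Y)) (Hinv HNm Zg)).
  + have [c Hc] := hz'.1 m hm1.
    have Hzn := down hz' hn1 (ltnW hmn) Hc.
    have X := chain Hdec hn1 (ltnW hmn) (keyP Hnormal hm1 Hc h3).
    have Y := t12 _ (keyP Hnormal hn1 Hzn hC).
    have Zg : Gam n (gam m) by apply: (chain Hdec hn1 _ (Hgam m hm).1); lia.
    apply: (Hgam n hn).2.
    have e : (gam n)^-1 = ((gam n)^-1 * (s2 * c)) * ((gam m)^-1 * (s2 * c))^-1 * (gam m)^-1 by gsimpl.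
    rewrite -[gam n]invgK e; refine (Hinv HNn _).
    exact: (Hmul HNn (Hmul HNn Y (Hinv HNn X)) (Hinv HNn Zg)).
Qed.
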